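(* Let $(X,+,d)$ be an Abelian group with translation-invariant metric $d$. Let $A\in K(X)$, let $(A_n)$ be a sequence in $K(X)$ converging to $A$ in the Pompeiu–Hausdorff metric, and assume that $(S(A_n))$ converges in $K(X)$ to some $B\in K(X)$. Then $B\subset S(A)$.
   Context: $d$ satisfies $d(x,y)=d(x+z,y+z)$ for all $x,y,z\in X$. $K(X)$ is the family of non-empty compact subsets of $X$ with the Pompeiu–Hausdorff metric $d_H(A,B)=\max\{\sup_{a\in A}d(a,B),\sup_{b\in B}d(A,b)\}$. The spectre of $A\subset X$ is $S(A):=\{z\in X:\ \forall_{a\in A}\ (a+z\in A \text{ or } a-z\in A)\}$; it is compact for compact non-empty $A$. *)

(* Defs.v *)
From mathcomp Require Import all_boot all_order all_algebra.
From mathcomp Require Import all_classical all_reals.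
Set Implicit Arguments. Unset Strict Implicit. Unset Printing Implicit Defensive.
Import Order.TTheory GRing.Theory Num.Theory.
Local Open Scope classical_set_scope.
Local Open Scope ring_scope.

Section Defs.
Variables (R : realType) (X : zmodType) (d : X -> X -> R).

Definition is_metric : Prop :=
  [/\ forall x y, 0 <= d x y,
      forall x y, d x y = 0 <-> x = y,
      forall x y, d x y = d y x &
      forall x y z, d x z <= d x y + d y z].

Definition translation_invariant : Prop :=
  forall x y z, d x y = d (x + z) (y + z).

Definition mball (x : X) (r : R) : set X := [set y | d x y < r].

Definition mopen (U : set X) : Prop :=
  forall x, U x -> exists2 r : R, 0 < r & mball x r `<=` U.

Definition mcompact (A : set X) : Prop :=
  forall (I : Type) (U : I -> set X),
    (forall i, mopen (U i)) -> A `<=` \bigcup_(i in setT) U i ->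
    exists2 F : set I, finite_set F & A `<=` \bigcup_(i in F) U i.

Definition inK (A : set X) : Prop := A !=set0 /\ mcompact A.

Definition dist_ps (a : X) (B : set X) : R := inf [set d a b | b in B].
Definition dist_sp (A : set X) (b : X) : R := inf [set d a b | a in A].

Definition dH (A B : set X) : R :=
  Num.max (sup [set dist_ps a B | a in A]) (sup [set dist_sp A b | b in B]).

Definition cvgH (An : nat -> set X) (A : set X) : Prop :=
  forall e : R, 0 < e -> exists N : nat, forall n, (N <= n)%N -> dH (An n) A < e.

Definition spectre (A : set X) : set X :=
  [set z | forall a, A a -> A (a + z) \/ A (a - z)].

End Defs.

(* Main.v *)
Require Import Defs.
From mathcomp Require Import all_boot all_order all_algebra.
From mathcomp Require Import all_classical all_reals.
From mathcomp Require Import lra.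
Set Implicit Arguments. Unset Strict Implicit. Unset Printing Implicit Defensive.
Import Order.TTheory GRing.Theory Num.Theory.
Local Open Scope classical_set_scope.
Local Open Scope ring_scope.

Section Aux.
Variables (R : realType) (X : zmodType) (d : X -> X -> R).
Hypothesis hd : is_metric d.
Hypothesis hti : translation_invariant d.

Lemma lin_aux (t p q r : R) : t < p -> r < p - t -> p <= q + r -> t < q.
Proof. lra. Qed.

Lemma d_ge0 x y : 0 <= d x y. Proof. by case: hd. Qed.
Lemma d_sym x y : d x y = d y x. Proof. by case: hd. Qed.
Lemma d_tri x y z : d x z <= d x y + d y z. Proof. by case: hd. Qed.
Lemma d_eq0 x y : d x y = 0 <-> x = y. Proof. by case: hd. Qed.

Lemma cover_incr (A : set X) (U : nat -> set X) : mcompact d A ->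
  (forall n, mopen d (U n)) -> (forall m n, (m <= n)%N -> U m `<=` U n) ->
  A `<=` \bigcup_(i in setT) U i -> exists M, A `<=` U M.
Proof.
move=> hA Uo Uinc cov.
have [F fF sub] := hA nat U Uo cov.
exists (\max_(j <- finmap.enum_fset (fset_set F)) j)%N => x Ax.
have [i Fi Uix] := sub x Ax.
apply: (Uinc i) Uix.
apply: (@leq_bigmax_seq _ _ xpredT id).
  by have := in_fset_set fF i; move=> ->; apply/mem_set.
by [].
Qed.

Lemma ball_open x r : mopen d (mball d x r).
Proof.
move=> y; rewrite /mball /= => hy.
exists (r - d x y); first by rewrite subr_gt0.
move=> w; rewrite /mball /= => hw.
have := d_tri x y w; lra.
Qed.

Definition bnd (A : set X) := exists c r, forall a, A a -> d c a <= r.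

Lemma K_bnd A : inK d A -> bnd A.
Proof.
case=> [[c Ac] hA].
have [M HM] : exists M, A `<=` mball d c M%:R.
  apply: cover_incr => //.
  - move=> n; exact: ball_open.
  - move=> m n mn y; rewrite /mball /= => h.
    by apply: (lt_le_trans h); rewrite ler_nat.
  - move=> y _; exists (Num.Def.archi_bound (d c y)) => //.
    rewrite /mball /=; apply: archi_boundP; exact: d_ge0.
exists c, M%:R => a /HM; rewrite /mball /=; exact: ltW.
Qed.

Lemma K_closed A x : inK d A -> ~ A x ->
  exists2 e : R, 0 < e & forall y, A y -> e <= d x y.
Proof.
case=> _ hA nAx.
pose U n := [set y | (1 / n.+1%:R : R) < d x y].
have [M HM] : exists M, A `<=` U M.
  apply: cover_incr => //.
  - move=> n y; rewrite /U /= => hy.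
    exists (d x y - 1 / n.+1%:R); first by rewrite subr_gt0.
    move=> w; rewrite /mball /= => hw.
    have := d_tri x w y; rewrite (d_sym w y) /U /= => h; exact: (lin_aux hy hw h).
  - move=> m n mn y; rewrite /U /=; apply: le_lt_trans.
    rewrite ler_pdivrMr ?ltr0Sn // mulrAC mul1r ler_pdivlMr ?ltr0Sn // mul1r.
    by rewrite ler_nat.
  - move=> y Ay; have dpos : 0 < d x y.
      rewrite lt_neqAle d_ge0 andbT; apply/eqP => /esym /d_eq0 xy.
      by apply: nAx; rewrite xy.
    exists (Num.Def.archi_bound (1 / d x y)) => //; rewrite /U /=.
    have h := archi_boundP (ltW (divr_gt0 ltr01 dpos)).
    have h2 : 1 / d x y < (Num.Def.archi_bound (1 / d x y)).+1%:R.
      apply: (lt_le_trans h); by rewrite ler_nat.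
    rewrite ltr_pdivrMr // in h2.
    by rewrite ltr_pdivrMr ?ltr0Sn // mulrC.
exists (1 / M.+1%:R); first by rewrite divr_gt0 // ltr0Sn.
by move=> y /HM; rewrite /U /=; apply: ltW.
Qed.

Lemma dsp_le C c b : C c -> dist_sp d C b <= d c b.
Proof.
move=> Cc; apply: ge_inf; last by exists c.
by exists 0 => _ [a _ <-]; exact: d_ge0.
Qed.

Lemma dsp_lt C b e : C !=set0 -> dist_sp d C b < e -> exists2 c, C c & d c b < e.
Proof.
move=> [c Cc] h.
have h1 : 0 < e - dist_sp d C b by rewrite subr_gt0.
have h2 : has_inf [set d a b | a in C].
  split; first by exists (d c b), c.
  by exists 0 => _ [a _ <-]; exact: d_ge0.
have [_ [a Ca <-] ha] := @inf_adherent R [set d a b | a in C] _ h1 h2.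
exists a => //; move: ha; rewrite /dist_sp addrC subrK //.
Qed.

Lemma dps_sp a B : dist_ps d a B = dist_sp d B a.
Proof.
rewrite /dist_ps /dist_sp; congr inf; apply/seteqP; split=> _ [b Bb <-];
  by exists b => //; rewrite d_sym.
Qed.

Lemma sup_sp C D b : C !=set0 -> bnd D -> D b ->
  dist_sp d C b <= sup [set dist_sp d C b | b in D].
Proof.
move=> [c0 Cc0] [c [r hr]] Db; apply: ub_le_sup; last by exists b.
exists (d c0 c + r) => _ [y Dy <-].
apply: (le_trans (dsp_le _ Cc0)).
have := d_tri c0 c y; have := hr y Dy; lra.
Qed.

Lemma close1 C D b e : C !=set0 -> bnd D -> D b -> dH d C D < e ->
  exists2 c, C c & d c b < e.
Proof.
move=> C0 bD Db h; apply: dsp_lt => //.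
apply: le_lt_trans h; apply: (le_trans (sup_sp C0 bD Db)).
by rewrite /dH le_max lexx orbT.
Qed.

Lemma close2 C D c e : D !=set0 -> bnd C -> C c -> dH d C D < e ->
  exists2 b, D b & d c b < e.
Proof.
move=> D0 bC Cc h.
have [b Db hb] : exists2 b, D b & d b c < e.
  apply: dsp_lt => //; apply: le_lt_trans h.
  have := sup_sp D0 bC Cc.
  have -> : [set dist_sp d D b | b in C] = [set dist_ps d a D | a in C].
    by apply/seteqP; split=> _ [a Ca <-]; exists a => //; rewrite dps_sp.
  rewrite -dps_sp => h1; apply: (le_trans h1).
  by rewrite /dH le_max lexx.
by exists b => //; rewrite d_sym.
Qed.

Lemma d_add a a' z z' : d (a + z) (a' + z') <= d a a' + d z z'.
Proof.
apply: (le_trans (d_tri _ (a' + z) _)).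
rewrite -hti [a' + z]addrC [a' + z']addrC -hti; lra.
Qed.

Lemma d_opp z z' : d (- z) (- z') = d z z'.
Proof.
rewrite (hti _ _ (z + z')) addKr (addrC z) addKr d_sym //.
Qed.

Lemma spectre0 (A : set X) : spectre A 0.
Proof. by move=> a Aa; left; rewrite addr0. Qed.

End Aux.

Theorem lemma3p8 (R : realType) (X : zmodType) (d : X -> X -> R)
  (hd : is_metric d) (hti : translation_invariant d)
  (A : set X) (An : nat -> set X) (B : set X)
  (hA : inK d A) (hAn : forall n, inK d (An n)) (hB : inK d B)
  (hconv : cvgH d An A)
  (hS : cvgH d (fun n => spectre (An n)) B) :
  B `<=` spectre A.
Proof.
move=> z Bz a Aa.
have main : forall e : R, 0 < e -> exists2 y, A y &
    (d (a + z) y < e \/ d (a - z) y < e).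
  move=> e e0.
  have e4 : 0 < e / 4 by rewrite divr_gt0.
  have [N1 H1] := hconv _ e4.
  have [N2 H2] := hS _ e4.
  pose n := maxn N1 N2.
  have h1 := H1 n (leq_maxl _ _).
  have h2 := H2 n (leq_maxr _ _).
  have [a' Aa' ha'] := close1 hd (proj1 (hAn n)) (K_bnd hd hA) Aa h1.
  have S0 : spectre (An n) !=set0 by exists 0; exact: spectre0.
  have [z' Sz' hz'] := close1 hd S0
     (K_bnd hd hB) Bz h2.
  have key : forall w, An n w -> exists2 y, A y & d w y < e / 4.
    move=> w Aw; have := close2 hd (proj1 hA) (K_bnd hd (hAn n)) Aw h1. by [].
  case: (Sz' a' Aa') => Aw; have [y Ay hy] := key _ Aw; exists y => //.
    left; have := d_tri hd (a + z) (a' + z') y.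
    have := d_add hd hti a a' z z'.
    rewrite (d_sym hd a a') (d_sym hd z z'); lra.
  right; have := d_tri hd (a - z) (a' - z') y.
  have := d_add hd hti a a' (- z) (- z').
  rewrite (d_opp hd hti) (d_sym hd a a') (d_sym hd z z'); lra.
case: (pselect (A (a + z))) => [|n1]; first by left.
case: (pselect (A (a - z))) => [|n2]; first by right.
have [e1 e1p He1] := K_closed hd hA n1.
have [e2 e2p He2] := K_closed hd hA n2.
have mp : 0 < Num.min e1 e2 by rewrite lt_min e1p e2p.
have [y Ay [hy|hy]] := main _ mp.
  have := He1 y Ay; move: hy; rewrite lt_min => /andP[hy _]; lra.
have := He2 y Ay; move: hy; rewrite lt_min => /andP[_ hy]; lra.
Qed.
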